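(* Under the hypotheses of theorem:ConvergenceRatesSparsityFull (with $1\le p\le2$), one has $\|s^\alpha-s^\ast\|=\mathcal{O}(\sqrt{\delta+\epsilon})$ as $\delta+\epsilon\to0$.
   Context: The hypotheses are: sparsity setting with $X,Y,Z$ Hilbert spaces, $B:X\times Y\to Z$ bilinear with $\|B(c,s)\|\le C\|c\|\|s\|$ and sequentially weak-weak continuous, $P:Y\to Y_n\subset Y$ linear bounded ($Y_n$ finite-dimensional), $s_{\mathrm{calib}}\in Y_n$, $\mathcal{R}_s:Y\to[0,\infty)$ proper convex weakly lower semi-continuous, $\{\varphi_i\}$ an orthonormal basis of $X$, $1\le w_i<\infty$, $\Phi_p(c)=\sum_iw_i|\langle c,\varphi_i\rangle|^p$, fixed $\gamma>0$, $\nu_1,\nu_2>0$, $\tilde{\mathcal{R}}(c,s)=\Phi_p(c)+\frac{\nu_2}{2}\|P(s)-s_{\mathrm{calib}}\|^2+\nu_1\mathcal{R}_s(s)$, $J^{u,s_m}_{\alpha,\beta,\mu}(c,s)=\frac12\|B(c,s)-u\|^2+\frac{\gamma}{2}\|s-s_m\|^2+\frac{\mu}{2}\|P(s)-s_{\mathrm{calib}}\|^2+\alpha\Phi_p(c)+\beta\mathcal{R}_s(s)$; $u^\ast=B(c^\ast,s^\ast)$ with $c^\ast\in\arg\min\{\Phi_p(c):B(c,s^\ast)=u^\ast\}$ and $\Phi_p(c^\ast)<\infty$; $\|u^\ast-u_\delta\|\le\delta$, $\|s^\ast-s_{\mathrm{mod},\epsilon}\|\le\epsilon$; there exist $\kappa_1\in[0,1)$,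 $\kappa_2\ge0$, $0\le\kappa_3<\min\{1,\gamma/(2\alpha_{\max})\}$, $\xi^\ast\in\partial\tilde{\mathcal{R}}(c^\ast,s^\ast)$ with $\langle\xi^\ast,(c^\ast-c,s^\ast-s)\rangle\le\kappa_1D^{\xi^\ast}_{\tilde{\mathcal{R}}}((c,s),(c^\ast,s^\ast))+\kappa_2\|B(c,s)-B(c^\ast,s^\ast)\|+\kappa_3\|s-s^\ast\|^2$ for all $(c,s)$, where $D^{\xi}_{\mathcal{R}}(x,x^\ast)=\mathcal{R}(x)-\mathcal{R}(x^\ast)-\langle\xi,x-x^\ast\rangle$; $(c^\alpha,s^\alpha)$ minimizes $J^{u_\delta,s_{\mathrm{mod},\epsilon}}_{\alpha,\nu_1\alpha,\nu_2\alpha}$, $0<\alpha\le\alpha_{\max}$, and $m(\delta+\epsilon)\le\alpha\le M(\delta+\epsilon)$ for constants $0<m\le M$. *)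

(* Defs.v *)
From HB Require Import structures.
From mathcomp Require Import all_boot all_order all_algebra.
From mathcomp Require Import all_classical all_reals all_analysis.
Set Implicit Arguments. Unset Strict Implicit. Unset Printing Implicit Defensive.
Import Order.TTheory GRing.Theory Num.Theory.
Import numFieldNormedType.Exports.
Local Open Scope classical_set_scope.
Local Open Scope ring_scope.

(* [ip] is an inner product on the normed space [X] inducing its norm.
   Together with completeness (completeNormedModType) this makes X a
   real Hilbert space. *)
Definition inner_product (R : realType) (X : normedModType R)
    (ip : X -> X -> R) : Prop :=
  [/\ forall x y, ip x y = ip y x,
      forall (a : R) (x y z : X), ip (a *: x + y) z = a * ip x z + ip y z &
      forall x, `|x| ^+ 2 = ip x x].

Definition weak_cvg (R : realType) (X : normedModType R)
    (ip : X -> X -> R) (u : nat -> X) (x : X) : Prop :=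
  forall y, ip (u n) y @[n --> \oo] --> ip x y.

Definition orthonormal_basis (R : realType) (X : normedModType R)
    (ip : X -> X -> R) (phi : nat -> X) : Prop :=
  (forall i j, ip (phi i) (phi j) = if i == j then 1 else 0) /\
  (forall x, (forall i, ip x (phi i) = 0) -> x = 0).

Definition Phi_p (R : realType) (X : normedModType R)
    (ip : X -> X -> R) (phi : nat -> X) (w : nat -> R) (p : R) (c : X)
    : \bar R :=
  (\sum_(i <oo) ((w i * `|ip c (phi i)| `^ p)%:E))%E.

Definition bilinear_map (R : realType) (X Y Z : normedModType R)
    (B : X -> Y -> Z) : Prop :=
  (forall (a : R) c c' s, B (a *: c + c') s = a *: B c s + B c' s) /\
  (forall (a : R) c s s', B c (a *: s + s') = a *: B c s + B c s').

Definition seq_weak_weak_continuous (R : realType) (X Y Z : normedModType R)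
    (ipX : X -> X -> R) (ipY : Y -> Y -> R) (ipZ : Z -> Z -> R)
    (B : X -> Y -> Z) : Prop :=
  forall (cn : nat -> X) (sn : nat -> Y) c s,
    weak_cvg ipX cn c -> weak_cvg ipY sn s ->
    weak_cvg ipZ (fun n => B (cn n) (sn n)) (B c s).

Definition linear_bounded (R : realType) (Y : normedModType R)
    (P : Y -> Y) : Prop :=
  (forall (a : R) x y, P (a *: x + y) = a *: P x + P y) /\
  exists C : R, forall y, `|P y| <= C * `|y|.

Definition finite_dim_subspace (R : realType) (Y : normedModType R)
    (Yn : set Y) : Prop :=
  exists (n : nat) (b : 'I_n -> Y),
    Yn = [set y | exists a : 'I_n -> R, y = \sum_(i < n) a i *: b i].

Definition convex_realfun (R : realType) (Y : normedModType R)
    (f : Y -> R) : Prop :=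
  forall x y (t : R), 0 <= t <= 1 ->
    f (t *: x + (1 - t) *: y) <= t * f x + (1 - t) * f y.

Definition weakly_lsc (R : realType) (Y : normedModType R)
    (ip : Y -> Y -> R) (f : Y -> R) : Prop :=
  forall (u : nat -> Y) x, weak_cvg ip u x ->
    ((f x)%:E <= limn_einf (fun n => (f (u n))%:E))%E.

Definition Rtilde (R : realType) (X Y : normedModType R)
    (ipX : X -> X -> R) (phi : nat -> X) (w : nat -> R) (p : R)
    (P : Y -> Y) (scal : Y) (Rs : Y -> R) (nu1 nu2 : R) (c : X) (s : Y)
    : \bar R :=
  (Phi_p ipX phi w p c + ((nu2 / 2) * `|P s - scal| ^+ 2 + nu1 * Rs s)%:E)%E.

(* duality pairing on X x Y (identified with its dual via Riesz) *)
Definition pairXY (R : realType) (X Y : normedModType R)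
    (ipX : X -> X -> R) (ipY : Y -> Y -> R) (xi : X * Y) (v : X * Y) : R :=
  ipX xi.1 v.1 + ipY xi.2 v.2.

Definition Jfun (R : realType) (X Y Z : normedModType R)
    (ipX : X -> X -> R) (phi : nat -> X) (w : nat -> R) (p : R)
    (B : X -> Y -> Z) (P : Y -> Y) (scal : Y) (Rs : Y -> R) (gamma : R)
    (u : Z) (sm : Y) (alpha beta mu : R) (c : X) (s : Y) : \bar R :=
  ((1 / 2 * `|B c s - u| ^+ 2 + gamma / 2 * `|s - sm| ^+ 2
     + mu / 2 * `|P s - scal| ^+ 2)%:E
   + alpha%:E * Phi_p ipX phi w p c + (beta * Rs s)%:E)%E.

(* Main.v *)
Require Import Defs.
From HB Require Import structures.
From mathcomp Require Import all_boot all_order all_algebra.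
From mathcomp Require Import all_classical all_reals all_analysis.
From mathcomp Require Import ring lra.
Import Order.TTheory GRing.Theory Num.Theory.
Import numFieldNormedType.Exports.
Local Open Scope classical_set_scope.
Local Open Scope ring_scope.

Lemma ip_oppr (R : realType) (X : normedModType R) (ip : X -> X -> R) :
  inner_product ip -> forall x y, ip x (- y) = - ip x y.
Proof.
case=> sym lin _ x y.
have h0 : ip 0 x = 0.
  have := lin 1 0 0 x; rewrite scale1r addr0 mul1r => h.
  by apply: (addrI (ip 0 x)); rewrite addr0 -h.
rewrite sym; have := lin (-1) y 0 x.
rewrite addr0 scaleN1r h0 addr0 mulN1r => ->; by rewrite sym.
Qed.

Lemma Phi_p_ge0 (R : realType) (X : normedModType R) (ip : X -> X -> R)
  (phi : nat -> X) (w : nat -> R) (p : R) (c : X) :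
  (forall i, 1 <= w i) -> (0 <= Phi_p ip phi w p c)%E.
Proof.
move=> hw; apply: nneseries_ge0 => n _ _; rewrite lee_fin.
apply: mulr_ge0; last exact: powR_ge0.
by apply: le_trans (hw n).
Qed.
Lemma real_est (R : realType) (g k2 k3 amax M q d e a r t v b : R) :
  0 < g -> 0 <= k2 -> 0 <= k3 -> 0 < amax -> 0 < q -> q = g/2 - k3 * amax ->
  0 < M -> 0 <= d -> 0 <= e -> d + e < 1 -> 0 < a -> a <= amax -> a <= M * (d+e) ->
  0 <= r -> 0 <= t -> 0 <= v -> b <= r + d -> v <= t + e -> e <= v ->
  r^+2/2 + g * t^+2 / 2 <= d^+2/2 + g * e^+2/2 + a * (k2 * b + k3 * v^+2) ->
  q / 2 * v ^+ 2 <= (1/2 + M^+2 * k2^+2/2 + M * k2 + g^+2/(2*q)) * (d + e).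
Proof.
move=> g0 k20 k30 am0 q0 qE M0 d0 e0 de1 a0 aam aM r0 t0 v0 bb vt ev H.
have ha : a * k3 * v^+2 <= (g/2 - q) * v^+2.
  rewrite qE; have : a * k3 <= amax * k3 by rewrite ler_wpM2r.
  move=> h; have -> : g / 2 - (g / 2 - k3 * amax) = amax * k3 by ring.
  by rewrite ler_wpM2r // sqr_ge0.
have ht : (v - e)^+2 <= t^+2.
  by rewrite ler_sqr ?nnegrE; lra.
have hb : a * k2 * b <= a * k2 * r + a * k2 * d.
  rewrite -mulrDr ler_wpM2l //; first exact: mulr_ge0 (ltW a0) k20.
have hr : a * k2 * r - r^+2/2 <= (a * k2)^+2/2.
  have := sqr_ge0 (a*k2 - r); lra.
have h1 : q * v^+2 <= g * v * e + d^+2/2 + (a*k2)^+2/2 + a * k2 * d.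
  have := mulr_ge0 (ltW g0) (sqr_ge0 t). nra.
have h2 : g * v * e <= q * v^+2 / 2 + g^+2 * e^+2 / (2 * q).
  have := sqr_ge0 (q * v - g * e).
  move=> hs.
  have : g * v * e * (2 * q) <= (q * v^+2 / 2 + g^+2 * e^+2 / (2*q)) * (2*q).
    have -> : (q * v^+2 / 2 + g^+2 * e^+2 / (2*q)) * (2*q) = q^+2 * v^+2 + g^+2 * e^+2.
      by field; lra.
    have -> : g * v * e * (2 * q) = 2 * (q * v) * (g * e) by ring.
    move: hs; rewrite sqrrB !exprMn; lra.
  by rewrite ler_pM2r //; lra.
have hd : d^+2 <= d + e by nra.
have he : e^+2 <= d + e by nra.
have hM : a^+2 <= M^+2 * (d+e).
  have : a^+2 <= (M*(d+e))^+2 by rewrite ler_sqr ?nnegrE; nra.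
  move=> h; apply: le_trans h _; rewrite exprMn ler_wpM2l ?sqr_ge0 //.
  by rewrite expr2 ler_piMr //; lra.
have had : a * d <= M * (d + e) by nra.
have hge : g^+2 * e^+2 / (2*q) <= g^+2/(2*q) * (d+e).
  rewrite mulrAC ler_wpM2l //; apply: divr_ge0; [exact: sqr_ge0 | lra].
have hk : (a*k2)^+2 <= M^+2 * k2^+2 * (d+e).
  have -> : M^+2 * k2^+2 * (d+e) = k2^+2 * (M^+2 * (d+e)) by ring.
  by rewrite exprMn mulrC ler_wpM2l ?sqr_ge0.
have hk2 : a * k2 * d <= M * k2 * (d+e).
  have -> : a * k2 * d = k2 * (a * d) by ring.
  have -> : M * k2 * (d+e) = k2 * (M * (d+e)) by ring.
  by rewrite ler_wpM2l.
nra.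
Qed.

Definition Kconst {R : realType} (g k2 k3 amax M : R) : R :=
  let q := g/2 - k3 * amax in
  Num.sqrt (2 / q * (1/2 + M^+2 * k2^+2/2 + M * k2 + g^+2/(2*q))) + 1.

Lemma real_final (R : realType) (g k2 k3 amax M d e a r t v b : R) :
  0 < g -> 0 <= k2 -> 0 <= k3 -> 0 < amax -> 0 < g/2 - k3 * amax ->
  0 < M -> 0 <= d -> 0 <= e -> d + e < 1 -> 0 < a -> a <= amax -> a <= M * (d+e) ->
  0 <= r -> 0 <= t -> 0 <= v -> b <= r + d -> v <= t + e ->
  r^+2/2 + g * t^+2 / 2 <= d^+2/2 + g * e^+2/2 + a * (k2 * b + k3 * v^+2) ->
  v <= Kconst (R:=R) g k2 k3 amax M * Num.sqrt (d + e).
Proof.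
move=> g0 k20 k30 am0 q0 M0 d0 e0 de1 a0 aam aM r0 t0 v0 bb vt H.
rewrite /Kconst.
set q := g/2 - k3 * amax in q0 *.
set A := 1/2 + M^+2 * k2^+2/2 + M * k2 + g^+2/(2*q).
have s0 := sqrtr_ge0 (d + e).
have sA := sqrtr_ge0 (2 / q * A).
have A0 : 0 <= A.
  rewrite /A; have : 0 <= g^+2/(2*q) by apply: divr_ge0; [exact: sqr_ge0|lra].
  have := sqr_ge0 M; have := sqr_ge0 k2; have := mulr_ge0 (ltW M0) k20.
  move=> h1 h2 h3 h4; have := mulr_ge0 h3 h2; lra.
case: (lerP e v) => ev.
  have h := @real_est R g k2 k3 amax M q d e a r t v b g0 k20 k30 am0 q0 erefl M0 d0 e0 de1 a0 aam aM r0 t0 v0 bb vt ev H.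
  have hv : v ^+ 2 <= 2 / q * A * (d + e).
    rewrite -mulrA -(ler_pM2l (_ : 0 < q / 2)); last by lra.
    have -> : q / 2 * (2 / q * (A * (d + e))) = A * (d + e) by field; lra.
    exact: h.
  have : Num.sqrt (v^+2) <= Num.sqrt (2 / q * A * (d + e)).
    by rewrite ler_sqrt //; apply: mulr_ge0; [apply: mulr_ge0; [apply: divr_ge0; lra|] |lra].
  rewrite sqrtr_sqr ger0_norm // sqrtrM; last by apply: mulr_ge0 => //; apply: divr_ge0; lra.
  move=> h2; apply: le_trans h2 _; rewrite mulrDl mul1r; lra.
have hs : e <= Num.sqrt (d + e).
  have s1 : Num.sqrt (d + e) <= 1 by rewrite -sqrtr1 ler_sqrt //; lra.
  have : d + e = Num.sqrt (d+e) ^+ 2 by rewrite sqr_sqrtr //; lra.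
  move=> h; have : Num.sqrt (d+e) ^+ 2 <= Num.sqrt (d+e) by rewrite expr2 ler_piMr.
  lra.
rewrite mulrDl mul1r; have := mulr_ge0 sA s0; lra.
Qed.

Theorem mainTheorem14
  (R : realType) (X Y Z : completeNormedModType R)
  (ipX : X -> X -> R) (ipY : Y -> Y -> R) (ipZ : Z -> Z -> R)
  (B : X -> Y -> Z) (C : R) (P : Y -> Y) (Yn : set Y) (scal : Y)
  (Rs : Y -> R) (phi : nat -> X) (w : nat -> R) (p gamma nu1 nu2 : R)
  (cstar : X) (sstar : Y) (kappa1 kappa2 kappa3 amax m M : R) (xi : X * Y) :
  inner_product ipX -> inner_product ipY -> inner_product ipZ ->
  bilinear_map B ->
  (forall c s, `|B c s| <= C * `|c| * `|s|) ->
  seq_weak_weak_continuous ipX ipY ipZ B ->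
  linear_bounded P -> finite_dim_subspace Yn ->
  (forall y, Yn (P y)) -> Yn scal ->
  (forall y, 0 <= Rs y) -> convex_realfun Rs -> weakly_lsc ipY Rs ->
  orthonormal_basis ipX phi ->
  (forall i, 1 <= w i) ->
  1 <= p <= 2 ->
  0 < gamma -> 0 < nu1 -> 0 < nu2 ->
  (* cstar is a Phi_p-minimizing solution of B(c, sstar) = ustar := B(cstar, sstar) *)
  (forall c, B c sstar = B cstar sstar ->
     (Phi_p ipX phi w p cstar <= Phi_p ipX phi w p c)%E) ->
  (Phi_p ipX phi w p cstar < +oo)%E ->
  0 < amax ->
  (* source condition *)
  0 <= kappa1 < 1 -> 0 <= kappa2 ->
  0 <= kappa3 -> kappa3 < Num.min 1 (gamma / (2 * amax)) ->
  (forall c s,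
     (Rtilde ipX phi w p P scal Rs nu1 nu2 cstar sstar
        + (pairXY ipX ipY xi (c - cstar, s - sstar))%:E
      <= Rtilde ipX phi w p P scal Rs nu1 nu2 c s)%E) ->
  (forall c s,
     ((pairXY ipX ipY xi (cstar - c, sstar - s))%:E
      <= kappa1%:E *
           (Rtilde ipX phi w p P scal Rs nu1 nu2 c s
            - Rtilde ipX phi w p P scal Rs nu1 nu2 cstar sstar
            - (pairXY ipX ipY xi (c - cstar, s - sstar))%:E)
         + (kappa2 * `|B c s - B cstar sstar| + kappa3 * `|s - sstar| ^+ 2)%:E)%E) ->
  0 < m -> m <= M ->
  exists K eta : R, 0 < eta /\
    forall (delta eps : R) (udelta : Z) (smod : Y) (alpha : R)
           (ca : X) (sa : Y),
      0 <= delta -> 0 <= eps -> delta + eps < eta ->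
      `|B cstar sstar - udelta| <= delta ->
      `|sstar - smod| <= eps ->
      0 < alpha <= amax ->
      m * (delta + eps) <= alpha <= M * (delta + eps) ->
      (forall c s,
         (Jfun ipX phi w p B P scal Rs gamma udelta smod
               alpha (nu1 * alpha) (nu2 * alpha) ca sa
          <= Jfun ipX phi w p B P scal Rs gamma udelta smod
               alpha (nu1 * alpha) (nu2 * alpha) c s)%E) ->
      `|sa - sstar| <= K * Num.sqrt (delta + eps).
Proof.
move=> ipXh ipYh ipZh _ _ _ _ _ _ _ _ _ _ _ hw _ g0 n10 n20 _ Pfin am0 /andP[k10 k11] k20 k30 k3lt H1 H2 m0 mM.
have k3a : kappa3 < gamma / (2 * amax) by move: k3lt; rewrite lt_min => /andP[].
have q0 : 0 < gamma / 2 - kappa3 * amax.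
  move: k3a; rewrite ltr_pdivlMr; last by lra.
  lra.
exists (Kconst gamma kappa2 kappa3 amax M), 1; split; first lra.
move=> delta eps ud smod alpha ca sa d0 e0 de1 hu hs /andP[a0 aam] /andP[aM1 aM2] Hm.
have M0 : 0 < M by lra.
have {Hm} Hm := Hm cstar sstar.
have [ps Eps] : exists ps, Phi_p ipX phi w p cstar = ps%:E.
  move: Pfin (@Phi_p_ge0 R X ipX phi w p cstar hw).
  by case: (Phi_p ipX phi w p cstar) => // r _ _; exists r.
have [pa Epa] : exists pa, Phi_p ipX phi w p ca = pa%:E.
  move: Hm (@Phi_p_ge0 R X ipX phi w p ca hw); rewrite /Jfun Eps.
  case: (Phi_p ipX phi w p ca) => // [r _ _|]; first by exists r.
  rewrite mulry gtr0_sg ?mul1e // -!EFinM -!EFinD.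
  idtac.
move: Hm; rewrite /Jfun Epa Eps -!EFinM -!EFinD lee_fin => Hm.
have {H1} := H1 ca sa; rewrite /Rtilde Epa Eps -!EFinD lee_fin => H1.
have {H2} := H2 ca sa; rewrite /Rtilde Epa Eps -!EFinD.
rewrite lee_fin => H2.
have hp : pairXY ipX ipY xi (cstar - ca, sstar - sa)
          = - pairXY ipX ipY xi (ca - cstar, sa - sstar).
  by rewrite /pairXY /= -(opprB ca) -(opprB sa) (@ip_oppr R X ipX ipXh) (@ip_oppr R Y ipY ipYh) opprD.
rewrite hp in H2.
set pi := pairXY ipX ipY xi (ca - cstar, sa - sstar) in H1 H2.
set Qa := nu2 / 2 * `|P sa - scal| ^+ 2 + nu1 * Rs sa in H1 H2.
set Qs := nu2 / 2 * `|P sstar - scal| ^+ 2 + nu1 * Rs sstar in H1 H2.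
set b := `|B ca sa - B cstar sstar| in H2.
set v := `|sa - sstar| in H2 *.
have hD : - (kappa2 * b + kappa3 * v ^+ 2) <= pa + Qa - (ps + Qs).
  have hS : 0 <= pa + Qa - (ps + Qs) - pi by lra.
  have k1' : 0 <= 1 - kappa1 by lra.
  have := mulr_ge0 k1' hS; nra.
have haD := ler_wpM2l (ltW a0) hD.
have hu2 : `|B cstar sstar - ud| ^+ 2 <= delta ^+ 2.
  by rewrite ler_sqr ?nnegrE.
have hs2 : `|sstar - smod| ^+ 2 <= eps ^+ 2.
  by rewrite ler_sqr ?nnegrE.
apply: (@real_final R gamma kappa2 kappa3 amax M delta eps alpha
   `|B ca sa - ud| `|sa - smod| v b) => //.
- exact: normr_ge0.
- rewrite /b; have -> : B ca sa - B cstar sstar = (B ca sa - ud) + (ud - B cstar sstar) by rewrite addrA subrK.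
  by rewrite (le_trans (ler_normD _ _)) // lerD2l distrC.
- rewrite /v; have -> : sa - sstar = (sa - smod) + (smod - sstar) by rewrite addrA subrK.
  by rewrite (le_trans (ler_normD _ _)) // lerD2l distrC.
- move: haD Hm; rewrite /Qa /Qs.
  move=> haD Hm; have hgs := ler_wpM2l (ltW g0) hs2.
  lra.
Qed.
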